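(* For every integer $n\ge0$, the Hankel determinant $d(n,s,q)=\det\big(f(i+j,s,q)\big)_{i,j=0}^n$ equals $$d(n,s,q)=q^{\frac{n^2(n+1)}{2}}\,\frac{\prod_{j=0}^n\big(\frac{s}{q^{2j-1}};q^2\big)_{2j}\;\prod_{j=0}^n(q;q)_j}{\prod_{j=0}^n(-q;q)_{j+n}}.$$
   Context: $q,s$ are indeterminates. $(x;q)_n=\prod_{j=0}^{n-1}(1-q^jx)$. The Gaussian binomial coefficient is $\begin{bmatrix} n\\ j\end{bmatrix}_q=\frac{(q;q)_n}{(q;q)_j(q;q)_{n-j}}$ for $0\le j\le n$ and $0$ otherwise. $f(n,s,q)=\dfrac{\sum_{j=0}^n s^j\begin{bmatrix} n\\ j\end{bmatrix}_{q^2}}{(-q;q)_n}$. *)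

(* Defs.v *)
From HB Require Import structures.
From mathcomp Require Import all_boot all_order all_algebra.
Set Implicit Arguments. Unset Strict Implicit. Unset Printing Implicit Defensive.
Import Order.TTheory GRing.Theory Num.Theory.
Local Open Scope ring_scope.

Definition qpoch (F : fieldType) (x q : F) (n : nat) : F :=
  \prod_(j < n) (1 - q ^+ j * x).

Definition gauss_binom (F : fieldType) (q : F) (n j : nat) : F :=
  if (j <= n)%N then qpoch q q n / (qpoch q q j * qpoch q q (n - j)) else 0.

Definition fH (F : fieldType) (s q : F) (n : nat) : F :=
  (\sum_(j < n.+1) s ^+ j * gauss_binom (q ^+ 2) n j) / qpoch (- q) q n.

Definition hankel_d (F : fieldType) (s q : F) (n : nat) : F :=
  \det (\matrix_(i < n.+1, j < n.+1) fH s q (i + j)%N).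

Definition K : fieldType := {fraction {poly {poly rat}}}.
Definition qK : K := tofrac ((('X : {poly rat}))%:P : {poly {poly rat}}).
Definition sK : K := tofrac ('X : {poly {poly rat}}).

(* Main.v *)
Require Import Defs.
From HB Require Import structures.
From mathcomp Require Import all_boot all_order all_algebra.
From mathcomp Require Import ring zify.
Import Order.TTheory GRing.Theory Num.Theory.
Local Open Scope ring_scope.

Section Gen.
Variable F : fieldType.
Variables s q : F.
Hypothesis Hq0 : q != 0.
Hypothesis Hq1 : forall k, (0 < k)%N -> 1 - q ^+ k != 0.
Hypothesis Hq2 : forall k, 1 + q ^+ k.+1 != 0.

Let Q := q ^+ 2.
Let qp k := qpoch Q Q k.

Lemma qpS k : qp k.+1 = qp k * (1 - Q ^+ k.+1).
Proof. by rewrite /qp /qpoch big_ord_recr /= exprSr. Qed.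

Lemma qp0 : qp 0 = 1.
Proof. by rewrite /qp /qpoch big_ord0. Qed.

Lemma QX_neq1 k : 1 - Q ^+ k.+1 != 0.
Proof. by rewrite /Q -exprM Hq1 // muln_gt0. Qed.

Lemma qp_neq0 k : qp k != 0.
Proof.
elim: k => [|k IH]; first by rewrite qp0 oner_neq0.
by rewrite qpS mulf_neq0 // QX_neq1.
Qed.

Let gb n j := gauss_binom Q n j.

Lemma gbE n j : (j <= n)%N -> gb n j = qp n / (qp j * qp (n - j)).
Proof. by move=> h; rewrite /gb /gauss_binom h. Qed.

Lemma gb_gt n j : (n < j)%N -> gb n j = 0.
Proof. by move=> h; rewrite /gb /gauss_binom leqNgt h. Qed.

Lemma gb_n0 n : gb n 0 = 1.
Proof. by rewrite gbE // qp0 mul1r subn0 divff // qp_neq0. Qed.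

Lemma gb_pascal n j : gb n.+1 j.+1 = gb n j + Q ^+ j.+1 * gb n j.+1.
Proof.
case: (ltngtP j n) => h.
- have [r ->] : exists r, n = (j + r.+1)%N by exists (n - j.+1)%N; lia.
  rewrite !gbE; try lia.
  have -> : ((j + r.+1).+1 - j.+1 = r.+1)%N by lia.
  have -> : ((j + r.+1) - j = r.+1)%N by lia.
  have -> : ((j + r.+1) - j.+1 = r)%N by lia.
  rewrite !qpS.
  have := qp_neq0 j; have := qp_neq0 r; have := QX_neq1 j; have := QX_neq1 r.
  have := QX_neq1 (j + r).+1.
  move=> h1 h2 h3 h4 h5.
  have -> : Q ^+ (j + r.+1).+1 = Q ^+ j.+1 * Q ^+ r.+1 by rewrite -exprD addSn addnS.
  set a := qp j; set b := qp r; set c := qp (j + r.+1).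
  field.
  by rewrite h4 h5 h2 h3.
- rewrite (gb_gt (n.+1) j.+1) ?ltnS // (gb_gt n j) // (gb_gt n j.+1) ?mulr0 ?addr0 //.
  by apply: ltnW.
- by rewrite h (gb_gt n n.+1) // mulr0 addr0 !gbE // !subnn qp0 !mulr1 !divff // qp_neq0.
Qed.

Lemma gb_abs n j : (1 - Q ^+ j.+1) * gb n.+1 j.+1 = (1 - Q ^+ n.+1) * gb n j.
Proof.
case: (leqP j n) => h; last by rewrite !gb_gt ?mulr0.
rewrite !gbE // subSS !qpS.
have := qp_neq0 j; have := qp_neq0 (n - j); have := QX_neq1 j.
move=> h1 h2 h3; field.
by rewrite h1 h2 h3.
Qed.


Lemma bump0 i : bump 0 i = i.+1. Proof. by []. Qed.

Let a n := \sum_(j < n.+1) s ^+ j * gb n j.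

Lemma a_step m : a m.+1 = s * a m + \sum_(j < m.+1) s ^+ j * Q ^+ j * gb m j.
Proof.
rewrite /a big_ord_recl /= gb_n0 expr0 mul1r.
under eq_bigr do rewrite bump0 gb_pascal mulrDr.
rewrite big_split /= big_distrr /=.
rewrite [X in _ = _ + X]big_ord_recl /= expr0 !mul1r gb_n0.
rewrite [X in 1 + (_ + X) = _]big_ord_recr /= (gb_gt m m.+1) // !mulr0 addr0.
rewrite addrCA; congr (_ + _).
  by apply: eq_bigr => i _; rewrite exprS mulrA.
congr (_ + _); apply: eq_bigr => i _; rewrite ?bump0 !exprS; ring.
Qed.

Lemma c_step m : \sum_(j < m.+2) s ^+ j * (1 - Q ^+ j) * gb m.+1 j
   = s * (1 - Q ^+ m.+1) * a m.
Proof.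
rewrite big_ord_recl /= expr0 subrr mulr0 mul0r add0r /a big_distrr /=.
apply: eq_bigr => i _; rewrite ?bump0 -mulrA gb_abs exprS; ring.
Qed.

Lemma a_rec n : a n.+2 = (1 + s) * a n.+1 - s * (1 - Q ^+ n.+1) * a n.
Proof.
rewrite a_step -c_step.
have -> : \sum_(j < n.+2) s ^+ j * Q ^+ j * gb n.+1 j =
   a n.+1 - \sum_(j < n.+2) s ^+ j * (1 - Q ^+ j) * gb n.+1 j.
  rewrite /a -sumrB; apply: eq_bigr => i _; ring.
ring.
Qed.


Let P n := qpoch (- q) q n.

Lemma PS n : P n.+1 = P n * (1 + q ^+ n.+1).
Proof. by rewrite /P /qpoch big_ord_recr /= mulrN opprK exprSr. Qed.

Lemma P0 : P 0 = 1.
Proof. by rewrite /P /qpoch big_ord0. Qed.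

Lemma P_neq0 n : P n != 0.
Proof.
elim: n => [|n IH]; first by rewrite P0 oner_neq0.
by rewrite PS mulf_neq0.
Qed.

Let f n := fH s q n.

Lemma fE n : f n = a n / P n.
Proof. by []. Qed.

Lemma f0 : f 0 = 1.
Proof. by rewrite fE /a big_ord1 expr0 mul1r gb_n0 P0 divr1. Qed.

Lemma f1 : f 1 = (1 + s) / (1 + q).
Proof.
rewrite fE /a big_ord_recr big_ord1 /= expr0 mul1r gb_n0 expr1.
rewrite gbE // subnn qp0 mulr1 divff ?qp_neq0 // mulr1.
by rewrite (PS 0) P0 mul1r expr1.
Qed.

Lemma f_rec n :
  (1 + q ^+ n.+2) * f n.+2 = (1 + s) * f n.+1 - s * (1 - q ^+ n.+1) * f n.
Proof.
rewrite !fE a_rec !PS.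
have h1 := P_neq0 n; have h2 := Hq2 n; have h3 := Hq2 n.+1.
have -> : Q ^+ n.+1 = q ^+ n.+1 * q ^+ n.+1 by rewrite /Q -exprM mulnC exprM expr2.
field.
by rewrite h1 h2 h3.
Qed.


Definition L (p : {poly F}) := \sum_(i < size p) p`_i * f i.

Lemma L_wide N (p : {poly F}) : (size p <= N)%N -> L p = \sum_(i < N) p`_i * f i.
Proof.
move=> hN; rewrite /L (big_ord_widen N (fun i => p`_i * f i)) // big_mkcond.
by apply: eq_bigr => i _; case: ltnP => // h; rewrite nth_default ?mul0r.
Qed.

Lemma LD (p r : {poly F}) : L (p + r) = L p + L r.
Proof.
pose N := maxn (size p) (size r).
rewrite (L_wide _ _ (size_polyD p r)) (L_wide _ _ (leq_maxl (size p) (size r))) (L_wide _ _ (leq_maxr (size p) (size r))).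
by rewrite -big_split; apply: eq_bigr => i _; rewrite coefD mulrDl.
Qed.

Lemma LZ c (p : {poly F}) : L (c *: p) = c * L p.
Proof.
rewrite (L_wide _ _ (size_scale_leq c p)) /L mulr_sumr.
by apply: eq_bigr => i _; rewrite coefZ mulrA.
Qed.

Lemma L0 : L 0 = 0.
Proof. by rewrite /L size_poly0 big_ord0. Qed.

Lemma LN (p : {poly F}) : L (- p) = - L p.
Proof. by rewrite -scaleN1r LZ mulN1r. Qed.

Lemma LB (p r : {poly F}) : L (p - r) = L p - L r.
Proof. by rewrite LD LN. Qed.

Lemma LC c (p : {poly F}) : L (c%:P * p) = c * L p.
Proof. by rewrite mul_polyC LZ. Qed.

Lemma L_sum (I : Type) (r : seq I) (Pr : pred I) (G : I -> {poly F}) :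
  L (\sum_(i <- r | Pr i) G i) = \sum_(i <- r | Pr i) L (G i).
Proof. exact: (big_morph L LD L0). Qed.

Lemma LXn m : L 'X^m = f m.
Proof.
rewrite /L size_polyXn big_ord_recr /= coefXn eqxx mul1r big1 ?add0r //.
by move=> i _; rewrite coefXn ltn_eqF ?mul0r.
Qed.

Lemma L1 : L 1 = 1.
Proof. by rewrite -(expr0 'X) LXn f0. Qed.

Lemma pearson (p : {poly F}) :
  L (('X - 1) * ('X - s%:P) * p) =
  - L ((q ^+ 2 *: 'X ^+ 2 - (s * q)%:P) * (p \Po (q *: 'X))).
Proof.
rewrite -[p]coefK poly_def mulr_sumr L_sum.
rewrite (big_morph (fun r => r \Po (q *: 'X)) (fun a b => comp_polyD a b (q *: 'X)) (comp_poly0 _)).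
rewrite mulr_sumr L_sum -sumrN; apply: eq_bigr => i _.
rewrite comp_polyZ comp_Xn_poly exprZn -!scalerAr.
rewrite !LZ -mulrN; congr (_ * _).
have E1 : ('X - 1) * ('X - s%:P) * 'X^i = 'X^(i.+2) - (1 + s)%:P * 'X^(i.+1) + s%:P * 'X^i.
  rewrite polyCD !exprS; ring.
have E2 : (q ^+ 2 *: 'X ^+ 2 - (s * q)%:P) * 'X^i = (q ^+ 2)%:P * 'X^(i.+2) - (s * q)%:P * 'X^i.
  rewrite -mul_polyC !exprS; ring.
rewrite E1 E2 !LB !LD !LC !LXn.
rewrite LN LC.
have h := f_rec i.
have h' : (1 + s) * f i.+1 = (1 + q ^+ i.+2) * f i.+2 + s * (1 - q ^+ i.+1) * f i.
  by rewrite h; ring.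
rewrite LXn h' !exprS; ring.
Qed.


Definition psi (c : F) j : {poly F} := \prod_(m < j) ('X - (c * q ^+ m)%:P).

Lemma psiS c j : psi c j.+1 = psi c j * ('X - (c * q ^+ j)%:P).
Proof. by rewrite /psi big_ord_recr. Qed.

Lemma psi0 c : psi c 0 = 1.
Proof. by rewrite /psi big_ord0. Qed.

Lemma psiSl j : psi s j.+1 = ('X - s%:P) * psi (s * q) j.
Proof.
rewrite /psi big_ord_recl /= expr0 mulr1; congr (_ * _).
by apply: eq_bigr => i _; rewrite bump0 exprS mulrA.
Qed.

Lemma psi_comp j : psi (s * q) j \Po (q *: 'X) = q ^+ j *: psi s j.
Proof.
elim: j => [|j IH]; first by rewrite !psi0 -polyC1 comp_polyC expr0 scale1r.
rewrite !psiS comp_polyM IH comp_polyB comp_polyX comp_polyC.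
rewrite -!mul_polyC exprS !polyCM; ring.
Qed.

Lemma Xpsi c j : 'X * psi c j = psi c j.+1 + (c * q ^+ j) *: psi c j.
Proof. by rewrite psiS -!mul_polyC; ring. Qed.

Definition W j := \prod_(k < j) (1 - s * q ^+ (k.*2.+1)).

Lemma WS j : W j.+1 = W j * (1 - s * q ^+ (j.*2.+1)).
Proof. by rewrite /W big_ord_recr. Qed.

Lemma W0 : W 0 = 1.
Proof. by rewrite /W big_ord0. Qed.

Lemma qdbl k : q ^+ (k.*2.+1) = q * (q ^+ k * q ^+ k).
Proof. by rewrite exprS -addnn exprD. Qed.

Lemma g_closed j : L (psi s j) = W j / P j.
Proof.
suff H : forall k, L (psi s k) = W k / P k /\ L (psi s k.+1) = W k.+1 / P k.+1 by case: (H j).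
clear j.
elim=> [|j [IH1 IH2]].
  rewrite psi0 L1 W0 P0 divr1; split => //.
  rewrite psiS psi0 mul1r LB -['X]expr1 LXn.
  rewrite expr0 mulr1 -[s%:P]mulr1 LC L1 f1 WS W0 mul1r (PS 0) P0 mul1r /=.
  rewrite expr1.
  have h := Hq2 0; rewrite expr1 in h.
  field; by rewrite h.
split => //.
have E := pearson (psi (s * q) j).
rewrite -mulrA -psiSl psi_comp in E.
have E1 : ('X - 1) * psi s j.+1 = psi s j.+2 + (s * q ^+ j.+1 - 1) *: psi s j.+1.
  by rewrite mulrBl mul1r Xpsi scalerBl scale1r addrA.
have E2 : (q ^+ 2 *: 'X ^+ 2 - (s * q)%:P) * (q ^+ j *: psi s j) =
   q ^+ j.+2 *: psi s j.+2 + (q ^+ j.+2 * (s * q ^+ j.+1 + s * q ^+ j)) *: psi s j.+1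
   + (q ^+ j * (q ^+ 2 * (s * q ^+ j) ^+ 2 - s * q)) *: psi s j.
  rewrite !psiS -!mul_polyC !exprS !(polyCD, polyCB, polyCM) /= ?expr0 ?mulr1 ?polyC1.
  ring.
rewrite E1 E2 !LD !LZ IH1 IH2 in E.
move/eqP: E; rewrite -subr_eq0 => /eqP E.
apply: (mulfI (Hq2 j.+1)); apply/eqP; rewrite -subr_eq0; apply/eqP; rewrite -E.
rewrite !WS !PS !qdbl.
have h1 := P_neq0 j; have h2 := Hq2 j; have h3 := Hq2 j.+1.
rewrite !exprS in h2 h3 *.
field.
by rewrite h1 h2 h3.
Qed.


Definition phi i : {poly F} := \prod_(m < i) ('X - (q ^+ m)%:P).
Definition U i := \prod_(k < i) (s - q ^+ (k.*2.+1)).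

Lemma phiS i : phi i.+1 = phi i * ('X - (q ^+ i)%:P).
Proof. by rewrite /phi big_ord_recr. Qed.

Lemma phi0 : phi 0 = 1.
Proof. by rewrite /phi big_ord0. Qed.

Lemma US i : U i.+1 = U i * (s - q ^+ (i.*2.+1)).
Proof. by rewrite /U big_ord_recr. Qed.

Lemma U0 : U 0 = 1.
Proof. by rewrite /U big_ord0. Qed.

Lemma G_closed i j : L (phi i * psi s j) = q ^+ (i * j) * U i * W j / P (i + j).
Proof.
elim: i j => [|i IH] j.
  by rewrite phi0 mul1r g_closed U0 mul0n expr0 !mul1r add0n.
have E : phi i.+1 * psi s j = phi i * psi s j.+1 + (s * q ^+ j - q ^+ i) *: (phi i * psi s j).
  rewrite phiS psiS -!mul_polyC !(polyCD, polyCB, polyCM); ring.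
rewrite E LD LZ !IH.
rewrite US WS addnS addSn !PS mulnS mulSn !exprD !qdbl.
have h1 := P_neq0 (i + j); have h2 := Hq2 (i + j).
rewrite exprS exprD in h2 *.
field.
by rewrite h1 h2.
Qed.


Lemma poly_wide N (p : {poly F}) : (size p <= N)%N -> p = \sum_(i < N) p`_i *: 'X^i.
Proof.
move=> hN; rewrite -[p in LHS]coefK poly_def.
rewrite (big_ord_widen N (fun i => p`_i *: 'X^i)) // big_mkcond.
by apply: eq_bigr => i _; case: ltnP => // h; rewrite nth_default ?scale0r.
Qed.

Lemma L_mul N (p r : {poly F}) : (size p <= N)%N -> (size r <= N)%N ->
  L (p * r) = \sum_(x < N) \sum_(y < N) p`_x * r`_y * f (x + y).
Proof.
move=> hp hr; rewrite {1}(poly_wide _ _ hp) {1}(poly_wide _ _ hr) mulr_suml L_sum.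
apply: eq_bigr => x _; rewrite mulr_sumr L_sum; apply: eq_bigr => y _.
by rewrite -scalerAl -scalerAr !LZ -exprD LXn mulrA.
Qed.

Lemma phi_monic i : phi i \is monic.
Proof. exact: monic_prod_XsubC. Qed.

Lemma psi_monic c j : psi c j \is monic.
Proof. exact: monic_prod_XsubC. Qed.

Lemma size_phi i : size (phi i) = i.+1.
Proof.
elim: i => [|i IH]; first by rewrite phi0 size_poly1.
by rewrite phiS size_Mmonic ?monic_neq0 ?phi_monic ?monicXsubC // size_XsubC IH addn2.
Qed.

Lemma size_psi c j : size (psi c j) = j.+1.
Proof.
elim: j => [|j IH]; first by rewrite psi0 size_poly1.
by rewrite psiS size_Mmonic ?monic_neq0 ?psi_monic ?monicXsubC // size_XsubC IH addn2.
Qed.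

Lemma coef_monic_top (p : {poly F}) k : p \is monic -> size p = k.+1 -> p`_k = 1.
Proof. by move=> /monicP hm hs; rewrite -hm lead_coefE hs. Qed.

Lemma det_coefmx N (G : 'I_N -> {poly F}) :
  (forall i : 'I_N, G i \is monic) -> (forall i : 'I_N, size (G i) = i.+1) ->
  \det (\matrix_(i < N, m < N) (G i)`_m) = 1.
Proof.
move=> hm hs; rewrite det_trig.
  by rewrite big1 // => i _; rewrite mxE (coef_monic_top _ _ (hm i) (hs i)).
apply/is_trig_mxP => i m him; rewrite mxE nth_default //.
by rewrite hs.
Qed.

Lemma hankel_G N :
  \det (\matrix_(i < N, j < N) f (i + j)%N) =
  \det (\matrix_(i < N, j < N) L (phi i * psi s j)).
Proof.
set Phi := \matrix_(i < N, m < N) (phi i)`_m.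
set Psi := \matrix_(i < N, m < N) (psi s i)`_m.
have dPhi : \det Phi = 1 by apply: det_coefmx => i; [exact: phi_monic | exact: size_phi].
have dPsi : \det Psi = 1 by apply: det_coefmx => i; [exact: psi_monic | exact: size_psi].
have E : Phi *m (\matrix_(i < N, j < N) f (i + j)%N) *m Psi^T =
         \matrix_(i < N, j < N) L (phi i * psi s j).
  apply/matrixP => i j; rewrite !mxE.
  rewrite (@L_mul N) ?size_phi ?size_psi //.
  rewrite exchange_big /=; apply: eq_bigr => y _; rewrite !mxE mulr_suml.
  apply: eq_bigr => x _; rewrite !mxE; ring.
by rewrite -E !det_mulmx det_tr dPhi dPsi mul1r mulr1.
Qed.


Definition fac (c : F) : {poly F} := 1 + c%:P * 'X.

Lemma size_fac c : (size (fac c) <= 2)%N.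
Proof.
rewrite /fac (leq_trans (size_polyD _ _)) // geq_max size_poly1 /=.
by rewrite mul_polyC (leq_trans (size_scale_leq _ _)) // size_polyX.
Qed.

Lemma size_prod_fac (c : nat -> F) k : (size (\prod_(m < k) fac (c m))%R <= k.+1)%N.
Proof.
elim: k => [|k IH]; first by rewrite big_ord0 size_poly1.
rewrite big_ord_recr /= (leq_trans (size_polyMleq _ _)) //.
have := size_fac (c k); move: IH.
case: (size (\prod_(i < k) fac (c i))%R) => [|x] //= h1 h2; lia.
Qed.

Lemma horner_fac c x : (fac c).[x] = 1 + c * x.
Proof. by rewrite /fac hornerD hornerCM hornerX hornerC. Qed.

Definition pp n j : {poly F} := 'X^j * \prod_(m < n - j) fac (q ^+ (j.+1 + m)).

Lemma size_pp n j : (j <= n)%N -> (size (pp n j) <= n.+1)%N.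
Proof.
move=> hj; rewrite /pp (leq_trans (size_polyMleq _ _)) // size_polyXn.
have := size_prod_fac (fun m => q ^+ (j.+1 + m)) (n - j).
case: (size _) => [|x] /= h; lia.
Qed.

Lemma coef_pp_lt n j k : (k < j)%N -> (pp n j)`_k = 0.
Proof. by move=> h; rewrite /pp coefXnM h. Qed.

Lemma coef_pp_diag n j : (pp n j)`_j = 1.
Proof.
rewrite /pp coefXnM ltnn subnn -horner_coef0 horner_prod.
by rewrite big1 // => i _; rewrite horner_fac mulr0 addr0.
Qed.

Lemma horner_pp n j x : (pp n j).[x] = x ^+ j * \prod_(m < n - j) (1 + q ^+ (j.+1 + m) * x).
Proof.
rewrite /pp hornerM hornerXn horner_prod; congr (_ * _).
by apply: eq_bigr => i _; rewrite horner_fac.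
Qed.

Lemma Pprod x b : P (x + b) = P x * \prod_(m < b) (1 + q ^+ (x + m).+1).
Proof.
elim: b => [|b IH]; first by rewrite addn0 big_ord0 mulr1.
by rewrite addnS PS IH big_ord_recr /= mulrA.
Qed.

Lemma detGc n :
  \det (\matrix_(i < n.+1, j < n.+1) (q ^+ (i * j) * U i * W j / P (i + j))) =
  (\prod_(i < n.+1) (U i / P (n + i))) *
  (\prod_(i < n.+1) \prod_(j < n.+1 | (i < j)%N) (q ^+ j - q ^+ i)) *
  \prod_(j < n.+1) W j.
Proof.
set d1 := \row_(i < n.+1) (U i / P (n + i)).
set d2 := \row_(j < n.+1) W j.
set av := \row_(k < n.+1) q ^+ k.
set VT := (Vandermonde n.+1 av)^T.
set Cm := \matrix_(k < n.+1, j < n.+1) (pp n j)`_k.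
have E : \matrix_(i < n.+1, j < n.+1) (q ^+ (i * j) * U i * W j / P (i + j)) =
         diag_mx d1 *m (VT *m Cm) *m diag_mx d2.
  apply/matrixP => i j; rewrite mul_mx_diag mul_diag_mx !mxE.
  have hj : (j <= n)%N by rewrite -ltnS.
  have -> : \sum_(k < n.+1) VT i k * Cm k j = (pp n j).[q ^+ i].
    rewrite (horner_coef_wide _ (size_pp _ _ hj)); apply: eq_bigr => k _.
    by rewrite !mxE mulrC.
  rewrite horner_pp.
  have HP : P (n + i) = P (i + j) * \prod_(m < n - j) (1 + q ^+ (i + j + m).+1).
    by rewrite -Pprod; congr P; lia.
  have -> : \prod_(m < n - j) (1 + q ^+ (j.+1 + m) * q ^+ i) =
            \prod_(m < n - j) (1 + q ^+ (i + j + m).+1).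
    by apply: eq_bigr => m _; rewrite -exprD; congr (1 + q ^+ _); lia.
  rewrite HP -exprM.
  have h1 := P_neq0 (i + j).
  have h2 : \prod_(m < n - j) (1 + q ^+ (i + j + m).+1) != 0.
    by apply/prodf_neq0 => m _; exact: Hq2.
  field.
  by rewrite h1 h2.
rewrite E !det_mulmx !det_diag det_tr det_Vandermonde.
have -> : \det Cm = 1.
  rewrite det_trig.
    by rewrite big1 // => i _; rewrite mxE coef_pp_diag.
  by apply/is_trig_mxP => k j hkj; rewrite mxE coef_pp_lt.
rewrite mulr1; congr (_ * _ * _).
- by apply: eq_bigr => i _; rewrite mxE.
- by apply: eq_bigr => i _; apply: eq_bigr => j _; rewrite !mxE.
- by apply: eq_bigr => i _; rewrite mxE.
Qed.


Definition tri j := (\sum_(i < j) i)%N.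

Lemma triS j : tri j.+1 = (tri j + j)%N.
Proof. by rewrite /tri big_ord_recr. Qed.

Lemma vand_row j :
  \prod_(i < j) (q ^+ j - q ^+ i) = (-1) ^+ j * q ^+ (tri j) * qpoch q q j.
Proof.
elim: j => [|j IH]; first by rewrite /tri /qpoch !big_ord0 !expr0 !mulr1.
rewrite big_ord_recl /= expr0.
have -> : \prod_(i < j) (q ^+ j.+1 - q ^+ bump 0 i) = q ^+ j * \prod_(i < j) (q ^+ j - q ^+ i).
  have E : \prod_(i < j) q = q ^+ j by rewrite prodr_const card_ord.
  rewrite -{1}E -big_split /=.
  by apply: eq_bigr => i _; rewrite bump0 !exprS mulrBr.
rewrite IH triS /qpoch big_ord_recr /= !exprD !exprS; ring.
Qed.

Lemma vand_all n :
  \prod_(i < n.+1) \prod_(j < n.+1 | (i < j)%N) (q ^+ j - q ^+ i) =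
  \prod_(j < n.+1) ((-1) ^+ j * q ^+ (tri j) * qpoch q q j).
Proof.
under eq_bigr do rewrite big_mkcond.
rewrite exchange_big /=; apply: eq_bigr => j _.
rewrite -vand_row -big_mkcond /=.
rewrite (big_ord_widen_cond (n1 := j) n.+1 predT (fun i => q ^+ j - q ^+ i)) //.
exact: ltnW.
Qed.

Lemma exp_sum n : (\sum_(j < n.+1) (j * j + tri j) = (n ^ 2 * (n + 1)) %/ 2)%N.
Proof.
have T : forall j, (2 * tri j = j * j.-1)%N.
  elim=> [|j IH]; first by rewrite /tri big_ord0.
  rewrite triS mulnDr IH /=; case: j {IH} => [|j] //=; lia.
have S : forall n, (2 * \sum_(j < n.+1) (j * j + tri j) = n ^ 2 * (n + 1))%N.
  elim=> [|m IH]; first by rewrite big_ord1 /tri big_ord0.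
  rewrite big_ord_recr /= mulnDr IH mulnDr.
  have := T m.+1; simpl; lia.
by rewrite -S mulKn.
Qed.

Lemma odd_pow j : \prod_(m < j) (- q ^+ (m.*2.+1)) = (-1) ^+ j * q ^+ (j * j).
Proof.
elim: j => [|j IH]; first by rewrite big_ord0 mul0n !expr0 mulr1.
rewrite big_ord_recr /= IH.
have -> : (j.+1 * j.+1 = j * j + j.*2.+1)%N by rewrite -addnn; lia.
rewrite exprD !exprS; ring.
Qed.

Lemma qint k : q ^ ((2 * k.+1)%N%:Z - 1) = q ^+ (k.*2.+1).
Proof.
have -> : (2 * k.+1)%N = (k.*2.+1).+1 by rewrite -addnn; lia.
by rewrite intS [1 + _]addrC addrK -exprnP.
Qed.

Lemma UW j : U j * W j =
  (-1) ^+ j * q ^+ (j * j) * qpoch (s / q ^ ((2 * j)%N%:Z - 1)) (q ^+ 2) (2 * j)%N.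
Proof.
case: j => [|k]; first by rewrite U0 W0 /qpoch muln0 big_ord0 !expr0 !mulr1.
rewrite qint.
set j := k.+1; set c := q ^+ (k.*2.+1).
have hc : c != 0 by rewrite expf_neq0.
have -> : (2 * j = j + j)%N by rewrite /j; lia.
rewrite -odd_pow /qpoch big_split_ord /= mulrA.
congr (_ * _); last first.
  apply: eq_bigr => m _.
  have -> : (q ^+ 2) ^+ (j + m) = c * q ^+ (m.*2.+1).
    by rewrite -exprM /c -exprD; congr (q ^+ _); rewrite /j; lia.
  by field.
have HA : \prod_(i < j) (1 - (q ^+ 2) ^+ i * (s / c)) =
          \prod_(i < j) (1 - (q ^+ 2) ^+ (j - i.+1) * (s / c)).
  by rewrite (reindex_inj rev_ord_inj).
rewrite HA -big_split /=.
apply: eq_bigr => m _.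
have hm : (m < j)%N := ltn_ord m.
have hq : q ^+ (m.*2.+1) != 0 by rewrite expf_neq0.
have E : (q ^+ 2) ^+ (j - m.+1) = c / q ^+ (m.*2.+1).
  apply: (mulIf hq); rewrite divfK // -exprM /c -exprD; congr (q ^+ _).
  by rewrite /j in hm *; lia.
rewrite E; field.
by rewrite hc hq.
Qed.


Lemma main_gen n :
  hankel_d s q n =
  q ^+ ((n ^ 2 * (n + 1)) %/ 2)%N *
  ((\prod_(j < n.+1) qpoch (s / q ^ ((2 * j)%N%:Z - 1)) (q ^+ 2) (2 * j)%N) *
   (\prod_(j < n.+1) qpoch q q j)) /
  (\prod_(j < n.+1) qpoch (- q) q (j + n)%N).
Proof.
rewrite /hankel_d (hankel_G n.+1).
have -> : \matrix_(i < n.+1, j < n.+1) L (phi i * psi s j) =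
          \matrix_(i < n.+1, j < n.+1) (q ^+ (i * j) * U i * W j / P (i + j)).
  by apply/matrixP => i j; rewrite !mxE G_closed.
rewrite detGc vand_all prodf_div -exp_sum -prodrXr.
have eP : \prod_(j < n.+1) qpoch (- q) q (j + n)%N = \prod_(i < n.+1) P (n + i).
  by apply: eq_bigr => i _; rewrite addnC.
rewrite eP.
have hP : \prod_(i < n.+1) P (n + i) != 0 by apply/prodf_neq0 => i _; exact: P_neq0.
have e1 : \prod_(j < n.+1) q ^+ (j * j + tri j)%N =
          \prod_(j < n.+1) q ^+ (j * j) * \prod_(j < n.+1) q ^+ tri j.
  by rewrite -big_split; apply: eq_bigr => j _; rewrite exprD.
have e2 : \prod_(j < n.+1) ((-1) ^+ j * q ^+ tri j * qpoch q q j) =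
          \prod_(j < n.+1) (-1) ^+ j * \prod_(j < n.+1) q ^+ tri j *
          \prod_(j < n.+1) qpoch q q j.
  by rewrite -!big_split.
have e3 : \prod_(j < n.+1) U j * \prod_(j < n.+1) W j =
          \prod_(j < n.+1) (-1) ^+ j * \prod_(j < n.+1) q ^+ (j * j) *
          \prod_(j < n.+1) qpoch (s / q ^ ((2 * j)%N%:Z - 1)) (q ^+ 2) (2 * j)%N.
  rewrite -!big_split; apply: eq_bigr => j _.
  exact: UW.
have e4 : \prod_(j < n.+1) (-1) ^+ j * \prod_(j < n.+1) (-1) ^+ j = 1 :> F.
  rewrite -big_split big1 // => j _ /=; by rewrite -exprMn mulrNN mulr1 expr1n.
rewrite e1 e2.
set A := \prod_(j < n.+1) U j; set B := \prod_(j < n.+1) W j.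
set Sg := \prod_(j < n.+1) (-1) ^+ j.
set X1 := \prod_(j < n.+1) q ^+ (j * j).
set X2 := \prod_(j < n.+1) q ^+ tri j.
set Y := \prod_(j < n.+1) qpoch q q j.
set Z := \prod_(j < n.+1) qpoch (s / q ^ ((2 * j)%N%:Z - 1)) (q ^+ 2) (2 * j)%N.
set D := \prod_(i < n.+1) P (n + i).
have -> : A / D * (Sg * X2 * Y) * B = (A * B) * Sg * X2 * Y / D by field.
rewrite e3.
have -> : Sg * X1 * Z * Sg * X2 * Y / D = (Sg * Sg) * (X1 * X2 * (Z * Y)) / D by ring.
by rewrite e4 mul1r.
Qed.

End Gen.

Lemma nz_poly_minus k : (0 < k)%N -> (1 - 'X^k : {poly rat}) != 0.
Proof.
move=> hk; apply/eqP => /(congr1 (fun p : {poly rat} => p`_k)).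
rewrite coefB coef1 coefXn eqxx coef0 (gtn_eqF hk) /= sub0r => /eqP.
by rewrite oppr_eq0 oner_eq0.
Qed.

Lemma nz_poly_plus k : (1 + 'X^(k.+1) : {poly rat}) != 0.
Proof.
apply/eqP => /(congr1 (fun p : {poly rat} => p`_k.+1)).
rewrite coefD coef1 coefXn eqxx coef0 /= add0r => /eqP.
by rewrite oner_eq0.
Qed.

Lemma qK_neq0 : qK != 0.
Proof.
by rewrite /qK tofrac_eq0 polyC_eq0 polyX_eq0.
Qed.

Lemma qK1 k : (0 < k)%N -> 1 - qK ^+ k != 0.
Proof.
move=> hk; rewrite /qK -tofracXn -tofrac1 -tofracB tofrac_eq0.
by rewrite -rmorphXn -polyC1 -polyCB polyC_eq0 nz_poly_minus.
Qed.

Lemma qK2 k : 1 + qK ^+ k.+1 != 0.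
Proof.
rewrite /qK -tofracXn -tofrac1 -tofracD tofrac_eq0.
by rewrite -rmorphXn -polyC1 -polyCD polyC_eq0 nz_poly_plus.
Qed.

Theorem theorem3p1 (n : nat) :
  hankel_d sK qK n =
  qK ^+ ((n ^ 2 * (n + 1)) %/ 2)%N *
  ((\prod_(j < n.+1) qpoch (sK / qK ^ ((2 * j)%N%:Z - 1)) (qK ^+ 2) (2 * j)%N) *
   (\prod_(j < n.+1) qpoch qK qK j)) /
  (\prod_(j < n.+1) qpoch (- qK) qK (j + n)%N).
Proof. exact: (@main_gen K sK qK qK_neq0 qK1 qK2 n). Qed.
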